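(* Let $N\ge 1$, let $\beta$ be a non-negative integer, and let $\mathbb{C}[x]=\mathbb{C}[x_1,\dots,x_N]$. For $Q$ in the algebra $\mathcal{H}_0'$ (defined in the context) and every $f\in\mathbb{C}[x]$, $$\sigma^A(Qf)=\rho^A(Q)\,\sigma^A(f).$$
   Context: Operators on $\mathbb{C}[x]$: $s_{ij}$ ($i\neq j$) swaps $x_i$ and $x_j$ in the argument of a function. The Dunkl operators are $D^A_j=\frac{\partial}{\partial x_j}+\beta\sum_{k\neq j}\frac{1-s_{jk}}{x_j-x_k}$, and the Cherednik operators are $\hat D^A_j=x_jD^A_j+\beta\sum_{k<j}s_{jk}$ ($j=1,\dots,N$). $\mathcal{H}_0'$ denotes the algebra of operators on $\mathbb{C}[x]$ generated by the $\hat D^A_j$ and the $s_{ij}$. Define $\tilde a^{\dagger}_j=\frac{1}{\sqrt2}\left(-D^A_j+2x_j\right)$ and $\tilde a_j=\frac{1}{\sqrt2}D^A_j$ (these are the conjugates $e^{\sum_k x_k^2/2}\circ\frac{1}{\sqrt2}(\mp D^A_j+x_j)\circ e^{-\sum_k x_k^2/2}$); the $\tilde a^\dagger_j$ mutually commute. $\rho^A$ denotes the algebra homomorphism from the operator algebra generated by $x_j$, $D^A_j$, $s_{ij}$ into the operators on $\mathbb{C}[x]$ determined by $\rho^A(x_j)=\tilde a^\dagger_j$, $\rho^A(D^A_j)=\tilde a_j$, $\rho^A(s_{ij})=s_{ij}$; in particular $\rho^A(\hat D^A_j)=\tilde a^\dagger_j\tilde a_j+\beta\sum_{k<j}s_{jk}$.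 The linear map $\sigma^A:\mathbb{C}[x]\to\mathbb{C}[x]$ is $\sigma^A(f)=f(\tilde a^\dagger_1,\dots,\tilde a^\dagger_N)\cdot 1$. *)

(* Defs.v *)
From HB Require Import structures.
From mathcomp Require Import all_boot all_order all_algebra all_fingroup.
From mathcomp Require Import mpoly.
From Stdlib Require Import ClassicalEpsilon.
Set Implicit Arguments. Unset Strict Implicit. Unset Printing Implicit Defensive.
Import Order.TTheory GRing.Theory Num.Theory.
Local Open Scope ring_scope.

Section Ops.
Variables (C : numClosedFieldType) (N : nat) (beta : nat).

Notation poly := {mpoly C[N]}.
Definition op := poly -> poly.

Definition swap (i j : 'I_N) : op := fun f => msym (tperm i j) f.

(* the divided difference (f - s_{jk} f)/(x_j - x_k): the (unique, for j <> k)
   polynomial g with (x_j - x_k) g = f - s_{jk} f *)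
Definition divdiff (j k : 'I_N) : op := fun f =>
  epsilon (inhabits 0) (fun g : poly => ('X_j - 'X_k) * g = f - swap j k f).

Definition dunkl (j : 'I_N) : op := fun f =>
  f^`M(j) + beta%:R *: \sum_(k < N | k != j) divdiff j k f.

Definition cherednik (j : 'I_N) : op := fun f =>
  'X_j * dunkl j f + beta%:R *: \sum_(k < N | (k < j)%N) swap j k f.

Definition adag (j : 'I_N) : op := fun f =>
  (sqrtC 2)^-1 *: (- dunkl j f + 2%:R *: ('X_j * f)).
Definition aop (j : 'I_N) : op := fun f => (sqrtC 2)^-1 *: dunkl j f.

Definition rho_cherednik (j : 'I_N) : op := fun f =>
  adag j (aop j f) + beta%:R *: \sum_(k < N | (k < j)%N) swap j k f.

(* sigma^A(f) = f(adag_1, ..., adag_N) . 1 (the adag_j commute) *)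
Definition adag_mono (m : 'X_{1..N}) : op :=
  foldr (fun i g => iter (m i) (adag i) \o g) id (enum 'I_N).
Definition sigmaA (f : poly) : poly :=
  \sum_(m <- msupp f) f@_m *: adag_mono m 1.
End Ops.

(* Syntactic elements of the algebra H_0' generated by the \hat D_j and s_{ij}. *)
Inductive H0expr (C : Type) (N : nat) : Type :=
| HD of 'I_N
| HS of 'I_N & 'I_N
| HOne
| HScale of C & H0expr C N
| HAdd of H0expr C N & H0expr C N
| HMul of H0expr C N & H0expr C N.

Fixpoint evalH (C : numClosedFieldType) (N : nat) (gD : 'I_N -> op C N)
  (Q : H0expr C N) : op C N :=
  match Q with
  | HD j => gD j
  | HS i j => swap i j
  | HOne => id
  | HScale c Q1 => fun f => c *: evalH gD Q1 f
  | HAdd Q1 Q2 => fun f => evalH gD Q1 f + evalH gD Q2 f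
  | HMul Q1 Q2 => fun f => evalH gD Q1 (evalH gD Q2 f)
  end.

(* Main.v *)
Require Import Defs.
From mathcomp Require Import all_boot all_order all_algebra all_fingroup.
From mathcomp Require Import mpoly.
From mathcomp Require Import ring zify.
From mathcomp Require Import ssrcomplements.
From Stdlib Require Import ClassicalEpsilon.
Set Implicit Arguments. Unset Strict Implicit. Unset Printing Implicit Defensive.
Import GRing.Theory Num.Theory.
Local Open Scope ring_scope.


Section S.
Variables (C : numClosedFieldType) (N : nat) (beta : nat).
Notation P := {mpoly C[N]}.

Lemma mp_ind (Pr : P -> Prop) :
  Pr 1 -> (forall f g, Pr f -> Pr g -> Pr (f + g)) ->
  (forall c f, Pr f -> Pr (c *: f)) ->
  (forall l f, Pr f -> Pr ('X_l * f)) -> forall f, Pr f.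
Proof.
move=> H1 HD HZ HX.
have HM : forall d (m : 'X_{1..N}), mdeg m = d -> Pr 'X_[m].
  elim=> [|d IH] m Hm.
    by move/eqP: Hm; rewrite mdeg_eq0 => /eqP ->; rewrite mpolyX0.
  have [l Hl] : exists l, (0 < m l)%N.
    apply/existsP; apply: contraT; rewrite negb_exists => /forallP H0.
    suff : m = 0%MM by move=> E; rewrite E mdeg0 in Hm.
    by apply/mnmP=> i; rewrite mnm0E; have := H0 i; rewrite lt0n negbK => /eqP.
  have Em : m = (U_(l) + (m - U_(l)))%MM.
    apply/mnmP=> i; rewrite mnmDE mnmBE mnm1E.
    by case: eqP => [<-|_]; [rewrite addnC subnK | rewrite subn0].
  have Hd : mdeg (m - U_(l))%MM = d.
    by move: Hm; rewrite {1}Em mdegD mdeg1 add1n => -[].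
  by rewrite Em mpolyXD; apply: HX; apply: IH.
elim/mpolyind => [|c m p _ _ Hp].
  by rewrite -(scale0r 1); apply: HZ.
by apply: HD => //; apply: HZ; apply: HM (erefl _).
Qed.


Local Notation sw := (@swap C N).
Implicit Types (f g : P) (i j k l : 'I_N).

Lemma swapD i j f g : sw i j (f + g) = sw i j f + sw i j g.
Proof. exact: msymD. Qed.
Lemma swapZ i j c f : sw i j (c *: f) = c *: sw i j f.
Proof. exact: msymZ. Qed.
Lemma swapM i j f g : sw i j (f * g) = sw i j f * sw i j g.
Proof. exact: msymM. Qed.
Lemma swapN i j f : sw i j (- f) = - sw i j f.
Proof. exact: msymN. Qed.
Lemma swapB i j f g : sw i j (f - g) = sw i j f - sw i j g.
Proof. exact: msymB. Qed.
Lemma swap0 i j : sw i j 0 = 0.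
Proof. exact: msym0. Qed.
Lemma swap1 i j : sw i j 1 = 1.
Proof. exact: msym1. Qed.
Lemma swap_sum i j (I : Type) (r : seq I) (Pp : pred I) (F : I -> P) :
  sw i j (\sum_(k <- r | Pp k) F k) = \sum_(k <- r | Pp k) sw i j (F k).
Proof. exact: (big_morph _ (swapD i j) (swap0 i j)). Qed.
Lemma swapX i j l : sw i j 'X_l = 'X_(tperm i j l).
Proof.
rewrite /swap msymX; congr mpolyX; apply/mnmP => k.
rewrite mnmE !mnm1E tpermV; congr nat_of_bool.
by apply/eqP/eqP => [->|<-]; rewrite tpermK.
Qed.
Lemma swapK i j f : sw i j (sw i j f) = f.
Proof. by rewrite /swap -msymMm tperm2 msym1m. Qed.
Lemma swapC i j : sw i j = sw j i.
Proof. by rewrite /swap tpermC. Qed.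
Lemma swapJ a b i j f :
  sw a b (sw i j (sw a b f)) = sw (tperm a b i) (tperm a b j) f.
Proof.
rewrite /swap -!msymMm -tpermJ; congr msym.
by rewrite /conjg tpermV mulgA.
Qed.

Lemma XsubX_neq0 (j k : 'I_N) : j != k -> ('X_j - 'X_k : P) != 0.
Proof.
move=> njk; rewrite subr_eq0; apply/eqP => /(congr1 (mcoeff U_(j))).
by rewrite !mcoeffXU eqxx eq_sym (negbTE njk) => /eqP; rewrite oner_eq0.
Qed.

Definition ee (j k l : 'I_N) : C := (l == j)%:R - (l == k)%:R.

Lemma XsubXt (j k l : 'I_N) : j != k ->
  ('X_l - 'X_(tperm j k l) : P) = ('X_j - 'X_k) * (ee j k l)%:MP.
Proof.
move=> njk; rewrite /ee mulrC mul_mpolyC.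
case: (tpermP j k l) => [->|->|/eqP nlj /eqP nlk].
- by rewrite eqxx (negbTE njk) subr0 scale1r.
- by rewrite eq_sym (negbTE njk) eqxx sub0r scaleN1r opprB.
- by rewrite (negbTE nlj) (negbTE nlk) !subrr scale0r.
Qed.

Lemma dd_exists (j k : 'I_N) : j != k -> forall f : P,
  exists g : P, ('X_j - 'X_k) * g = f - sw j k f.
Proof.
move=> njk; elim/mp_ind.
- by exists 0; rewrite swap1 subrr mulr0.
- move=> f g [a Ha] [b Hb]; exists (a + b).
  by rewrite mulrDr Ha Hb swapD opprD addrACA.
- move=> c f [a Ha]; exists (c *: a).
  by rewrite -scalerAr Ha swapZ scalerBr.
- move=> l f [a Ha]; exists ('X_l * a + (ee j k l)%:MP * sw j k f).
  rewrite swapM swapX mulrDr mulrA [_ * 'X_l]mulrC -mulrA Ha mulrA -XsubXt //.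
  by rewrite mulrBr mulrBl addrA subrK.
Qed.

Lemma dd_spec (j k : 'I_N) f : j != k ->
  ('X_j - 'X_k) * divdiff j k f = f - sw j k f.
Proof.
move=> njk; rewrite /divdiff.
exact: (epsilon_spec (inhabits (0:P)) (fun g : P => ('X_j - 'X_k) * g = f - sw j k f) (dd_exists njk f)).
Qed.


Lemma dd_uniq (j k : 'I_N) f g : j != k ->
  ('X_j - 'X_k) * g = f - sw j k f -> divdiff j k f = g.
Proof. by move=> njk H; apply: (mulfI (XsubX_neq0 njk)); rewrite dd_spec. Qed.

Lemma ddD (j k : 'I_N) f g : j != k ->
  divdiff j k (f + g) = divdiff j k f + divdiff j k g.
Proof.
by move=> njk; apply: dd_uniq => //; rewrite mulrDr !dd_spec // swapD opprD addrACA.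
Qed.

Lemma ddZ (j k : 'I_N) c f : j != k ->
  divdiff j k (c *: f) = c *: divdiff j k f.
Proof.
by move=> njk; apply: dd_uniq => //; rewrite -scalerAr !dd_spec // swapZ scalerBr.
Qed.

Lemma dd1 (j k : 'I_N) : j != k -> divdiff j k (1 : P) = 0.
Proof. by move=> njk; apply: dd_uniq => //; rewrite swap1 subrr mulr0. Qed.

Lemma ddX (j k l : 'I_N) f : j != k ->
  divdiff j k ('X_l * f) = 'X_l * divdiff j k f + (ee j k l)%:MP * sw j k f.
Proof.
move=> njk; apply: dd_uniq => //.
rewrite swapM swapX mulrDr mulrA [_ * 'X_l]mulrC -mulrA dd_spec // mulrA -XsubXt //.
by rewrite mulrBr mulrBl addrA subrK.
Qed.

Local Notation D := (dunkl beta).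

Lemma DD j f g : D j (f + g) = D j f + D j g.
Proof.
rewrite /dunkl /= mderivD.
rewrite (eq_bigr (fun k => divdiff j k f + divdiff j k g)); last first.
  by move=> k nkj; rewrite ddD // eq_sym.
by rewrite big_split /= scalerDr addrACA.
Qed.

Lemma DZ j c f : D j (c *: f) = c *: D j f.
Proof.
rewrite /dunkl /= mderivZ scalerDr; congr (_ + _).
rewrite (eq_bigr (fun k => c *: divdiff j k f)); last first.
  by move=> k nkj; rewrite ddZ // eq_sym.
by rewrite -scaler_sumr !scalerA mulrC.
Qed.

Lemma D0 j : D j (0 : P) = 0.
Proof. by have := DZ j 0 0; rewrite !scale0r. Qed.

Lemma DN j f : D j (- f) = - D j f.
Proof. by rewrite -scaleN1r DZ scaleN1r. Qed.

Lemma DB j f g : D j (f - g) = D j f - D j g.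
Proof. by rewrite DD DN. Qed.

Lemma D_sum j (I : Type) (r : seq I) (Pp : pred I) (F : I -> P) :
  D j (\sum_(k <- r | Pp k) F k) = \sum_(k <- r | Pp k) D j (F k).
Proof. exact: (big_morph _ (DD j) (D0 j)). Qed.

Lemma D1 j : D j (1 : P) = 0.
Proof.
rewrite /dunkl /= mderivC big1 ?scaler0 ?addr0 // => k nkj.
by rewrite dd1 // eq_sym.
Qed.

Definition cc (j l : 'I_N) (f : P) : P :=
  if l == j then f + beta%:R *: \sum_(k < N | k != j) sw j k f
  else - (beta%:R *: sw j l f).

Lemma mderivXU (j l : 'I_N) : ('X_l : P)^`M(j) = (l == j)%:R%:MP.
Proof.
rewrite mderivX mnm1E; case: eqP => [->|_]; last by rewrite scale0r.
have -> : (U_(j) - U_(j))%MM = 0%MM.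
  by apply/mnmP => i; rewrite mnmBE subnn mnm0E.
by rewrite mpolyX0 scale1r.
Qed.

Lemma DX j l f : D j ('X_l * f) = 'X_l * D j f + cc j l f.
Proof.
rewrite /dunkl /= mderivM mderivXU.
rewrite (eq_bigr (fun k => 'X_l * divdiff j k f + (ee j k l)%:MP * sw j k f));
  last by move=> k nkj; rewrite ddX // eq_sym.
rewrite big_split /= -mulr_sumr /cc.
case: eqP => [->|/eqP nlj].
  rewrite (eq_bigr (fun k => sw j k f)); last first.
    by move=> k nkj; rewrite /ee eqxx eq_sym (negbTE nkj) subr0 mul1r.
  rewrite -!mul_mpolyC /= mpolyC1 mul1r.
  set b := beta%:R%:MP; set S1 := \sum_(_ < _ | _) divdiff _ _ _; set S2 := \sum_(_ < _ | _) _.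
  ring.
have -> : \sum_(i < N | i != j) (ee j i l)%:MP * sw j i f = - sw j l f.
  rewrite (bigD1 l) //= big1 ?addr0; last first.
    by move=> k /andP [_ nkl]; rewrite /ee (negbTE nlj) eq_sym (negbTE nkl) subrr mpolyC0 mul0r.
  by rewrite /ee eqxx (negbTE nlj) sub0r mpolyCN mpolyC1 mulN1r.
rewrite mpolyC0 mul0r add0r -!mul_mpolyC.
set b := beta%:R%:MP; set S1 := \sum_(_ < _ | _) divdiff _ _ _.
ring.
Qed.


End S.


Fact sw_key : unit. Proof. by []. Qed.
Fact D_key : unit. Proof. by []. Qed.
Fact ssum_key : unit. Proof. by []. Qed.
Fact ssum2_key : unit. Proof. by []. Qed.
Fact cc_key : unit. Proof. by []. Qed.

Section Sealed.
Variables (C : numClosedFieldType) (N : nat) (beta : nat).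
Notation P := {mpoly C[N]}.
Implicit Types (f g : P) (a b i j k l : 'I_N).

Definition Sw := locked_with sw_key (@swap C N).
Lemma SwE : Sw = @swap C N. Proof. by rewrite /Sw unlock. Qed.

Lemma SwD i j f g : Sw i j (f + g) = Sw i j f + Sw i j g.
Proof. by rewrite SwE swapD. Qed.
Lemma SwZ i j c f : Sw i j (c *: f) = c *: Sw i j f.
Proof. by rewrite SwE swapZ. Qed.
Lemma SwM i j f g : Sw i j (f * g) = Sw i j f * Sw i j g.
Proof. by rewrite SwE swapM. Qed.
Lemma SwN i j f : Sw i j (- f) = - Sw i j f.
Proof. by rewrite SwE swapN. Qed.
Lemma SwB i j f g : Sw i j (f - g) = Sw i j f - Sw i j g.
Proof. by rewrite SwE swapB. Qed.
Lemma Sw0 i j : Sw i j (0 : P) = 0.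
Proof. by rewrite SwE swap0. Qed.
Lemma Sw1 i j : Sw i j (1 : P) = 1.
Proof. by rewrite SwE swap1. Qed.
Lemma Sw_sum i j (I : Type) (r : seq I) (Pp : pred I) (F : I -> P) :
  Sw i j (\sum_(k <- r | Pp k) F k) = \sum_(k <- r | Pp k) Sw i j (F k).
Proof. by rewrite SwE swap_sum. Qed.
Lemma SwX i j l : Sw i j ('X_l : P) = 'X_(tperm i j l).
Proof. by rewrite SwE swapX. Qed.
Lemma SwK i j f : Sw i j (Sw i j f) = f.
Proof. by rewrite SwE swapK. Qed.
Lemma SwC i j f : Sw i j f = Sw j i f.
Proof. by rewrite SwE swapC. Qed.
Lemma SwJ a b i j f :
  Sw a b (Sw i j (Sw a b f)) = Sw (tperm a b i) (tperm a b j) f.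
Proof. by rewrite SwE swapJ. Qed.

Definition ssum := locked_with ssum_key
  (fun i g => \sum_(k < N | k != i) Sw i k g).
Lemma ssumE i g : ssum i g = \sum_(k < N | k != i) Sw i k g.
Proof. by rewrite /ssum unlock. Qed.
Definition ssum2 := locked_with ssum2_key
  (fun i j g => \sum_(k < N | (k != i) && (k != j)) Sw i k g).
Lemma ssum2E i j g : ssum2 i j g = \sum_(k < N | (k != i) && (k != j)) Sw i k g.
Proof. by rewrite /ssum2 unlock. Qed.

Definition ccS := locked_with cc_key (fun j l f =>
  if l == j then f + beta%:R *: ssum j f else - (beta%:R *: Sw j l f)).
Lemma cc_ii i g : ccS i i g = g + beta%:R *: ssum i g.
Proof. by rewrite /ccS unlock eqxx. Qed.
Lemma cc_ne j l g : l != j -> ccS j l g = - (beta%:R *: Sw j l g).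
Proof. by move=> nlj; rewrite /ccS unlock (negbTE nlj). Qed.

Definition Dk := locked_with D_key (dunkl (C:=C) (N:=N) beta).
Lemma DkE : Dk = dunkl beta. Proof. by rewrite /Dk unlock. Qed.

Lemma DkD j f g : Dk j (f + g) = Dk j f + Dk j g.
Proof. by rewrite DkE DD. Qed.
Lemma DkZ j c f : Dk j (c *: f) = c *: Dk j f.
Proof. by rewrite DkE DZ. Qed.
Lemma Dk0 j : Dk j (0 : P) = 0.
Proof. by rewrite DkE D0. Qed.
Lemma DkN j f : Dk j (- f) = - Dk j f.
Proof. by rewrite DkE DN. Qed.
Lemma DkB j f g : Dk j (f - g) = Dk j f - Dk j g.
Proof. by rewrite DkE DB. Qed.
Lemma Dk1 j : Dk j (1 : P) = 0.
Proof. by rewrite DkE D1. Qed.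
Lemma Dk_sum j (I : Type) (r : seq I) (Pp : pred I) (F : I -> P) :
  Dk j (\sum_(k <- r | Pp k) F k) = \sum_(k <- r | Pp k) Dk j (F k).
Proof. by rewrite DkE D_sum. Qed.
Lemma DkX j l f : Dk j ('X_l * f) = 'X_l * Dk j f + ccS j l f.
Proof.
rewrite DkE DX; congr (_ + _).
rewrite /cc /ccS /ssum !unlock /= SwE.
by case: eqP.
Qed.

End Sealed.


Section Comm.
Variables (C : numClosedFieldType) (N : nat) (beta : nat).
Notation P := {mpoly C[N]}.
Implicit Types (f g : P) (a b i j k l : 'I_N).
Local Notation sw := (@Sw C N).
Local Notation D := (@Dk C N beta).
Local Notation cc := (@ccS C N beta).

Lemma tperm_eqK a b i l : (tperm a b l == i) = (l == tperm a b i).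
Proof. by apply/eqP/eqP => [<-|->]; rewrite tpermK. Qed.

Lemma ssum_equiv a b i f : sw a b (ssum i (sw a b f)) = ssum (tperm a b i) f.
Proof.
rewrite !ssumE Sw_sum (reindex_inj (@perm_inj _ (tperm a b))) /=.
apply: eq_big => [k|k _]; first by rewrite tperm_eqK.
by have := SwJ a b i (tperm a b k) f; rewrite tpermK.
Qed.

Lemma cc_equiv a b i l f :
  sw a b (cc i (tperm a b l) (sw a b f)) = cc (tperm a b i) l f.
Proof.
have [E|nE] := eqVneq l (tperm a b i).
  have E' : tperm a b l = i by rewrite E tpermK.
  rewrite E' E !cc_ii SwD SwK SwZ ssum_equiv; reflexivity.
have nE' : tperm a b l != i by rewrite tperm_eqK.
rewrite (cc_ne _ _ nE') (cc_ne _ _ nE) SwN SwZ.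
by have := SwJ a b i (tperm a b l) f; rewrite tpermK => ->.
Qed.

Lemma D_equiv a b i f : sw a b (D i (sw a b f)) = D (tperm a b i) f.
Proof.
elim/mp_ind: f.
- by rewrite Sw1 Dk1 Sw0 Dk1.
- move=> f g Hf Hg; rewrite SwD DkD SwD [RHS]DkD; congr (_ + _); [exact Hf|exact Hg].
- move=> c f Hf; rewrite SwZ DkZ SwZ [RHS]DkZ; congr (_ *: _); exact Hf.
- move=> l f Hf; rewrite SwM SwX DkX SwD SwM SwX tpermK.
  rewrite cc_equiv [RHS]DkX; congr (_ * _ + _); exact Hf.
Qed.

Lemma D_sw a b i f : D i (sw a b f) = sw a b (D (tperm a b i) f).
Proof.
have := D_equiv a b (tperm a b i) (sw a b f); rewrite SwK tpermK => E.
symmetry; exact E.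
Qed.

Lemma ssum_split i j g : j != i -> ssum i g = sw i j g + ssum2 i j g.
Proof. by move=> nji; rewrite ssumE ssum2E (bigD1 j nji). Qed.

Lemma D_ssum i j f : j != i -> D j (ssum i f) = sw i j (D i f) + ssum2 i j (D j f).
Proof.
move=> nji; rewrite ssumE ssum2E Dk_sum (bigD1 j nji) /= D_sw tpermR; congr (_ + _).
apply: eq_bigr => k /andP [nki nkj]; rewrite D_sw tpermD //; rewrite eq_sym //.
Qed.

Lemma E_li i j f : i != j ->
  cc i i (D j f) + D i (cc j i f) = cc j i (D i f) + D j (cc i i f).
Proof.
move=> nij; have nji : j != i by rewrite eq_sym.
rewrite !cc_ii !(cc_ne _ _ nij) DkN DkZ D_sw tpermR DkD DkZ (D_ssum _ nji).
rewrite (ssum_split _ nji) !(SwC j i).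
set S := ssum2 _ _ _; set B := beta%:R.
rewrite -!mul_mpolyC; ring.
Qed.

Lemma E_all i j l f :
  cc i l (D j f) + D i (cc j l f) = cc j l (D i f) + D j (cc i l f).
Proof.
have [<-|nij] := eqVneq i j; first reflexivity.
have [->|nli] := eqVneq l i; first exact: E_li.
have [->|nlj] := eqVneq l j.
  symmetry; apply: E_li; rewrite eq_sym; exact nij.
rewrite !(cc_ne _ _ nli) !(cc_ne _ _ nlj) !DkN !DkZ !D_sw.
have nji : j != i by rewrite eq_sym.
rewrite (tpermD nji nli) (tpermD nij nlj).
set B := beta%:R; rewrite -!mul_mpolyC; ring.
Qed.

Lemma D_comm i j f : D i (D j f) = D j (D i f).
Proof.
elim/mp_ind: f.
- by rewrite !Dk1 !Dk0.
- move=> f g Hf Hg; rewrite !DkD; congr (_ + _); [exact Hf|exact Hg].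
- move=> c f Hf; rewrite !DkZ; congr (_ *: _); exact Hf.
- move=> l f Hf; rewrite !(DkX, DkD) -!addrA; congr (_ + _).
    congr (_ * _); exact Hf.
  exact: E_all.
Qed.

End Comm.


Fact A_key : unit. Proof. by []. Qed.

Section Adag.
Variables (C : numClosedFieldType) (N : nat) (beta : nat).
Notation P := {mpoly C[N]}.
Implicit Types (f g : P) (a b i j k l : 'I_N).
Local Notation sw := (@Sw C N).
Local Notation D := (@Dk C N beta).
Local Notation cc := (@ccS C N beta).
Local Notation s := (sqrtC (2%:R : C)).
Local Notation r := ((sqrtC (2%:R : C))^-1).

Definition Ad := locked_with A_key (adag (C:=C) (N:=N) beta).
Lemma AdE : Ad = adag beta. Proof. by rewrite /Ad unlock. Qed.

Lemma s_neq0 : s != 0.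
Proof. by rewrite sqrtC_eq0 pnatr_eq0. Qed.

Lemma r2 : r * 2%:R = s.
Proof.
by rewrite -{2}(sqrtCK (2%:R : C)) expr2 mulrA mulVf ?mul1r //; exact: s_neq0.
Qed.

Lemma AE j f : Ad j f = s *: ('X_j * f) - r *: D j f.
Proof.
rewrite AdE /adag DkE scalerDr scalerA r2 scalerN addrC; reflexivity.
Qed.

Lemma AD j f g : Ad j (f + g) = Ad j f + Ad j g.
Proof. rewrite !AE mulrDr DkD !scalerDr opprD addrACA; reflexivity. Qed.
Lemma AZ j c f : Ad j (c *: f) = c *: Ad j f.
Proof.
rewrite !AE DkZ -!mul_mpolyC; ring.
Qed.
Lemma A0 j : Ad j (0 : P) = 0.
Proof. by have := AZ j 0 0; rewrite !scale0r. Qed.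
Lemma A_sum j (I : Type) (rr : seq I) (Pp : pred I) (F : I -> P) :
  Ad j (\sum_(k <- rr | Pp k) F k) = \sum_(k <- rr | Pp k) Ad j (F k).
Proof. exact: (big_morph _ (AD j) (A0 j)). Qed.

Lemma cc_sym i j f : cc i j f = cc j i f.
Proof.
have [->|nij] := eqVneq i j; first reflexivity.
have nji : j != i by rewrite eq_sym.
rewrite (cc_ne _ _ nji) (cc_ne _ _ nij) SwC; reflexivity.
Qed.

Lemma A_comm i j f : Ad i (Ad j f) = Ad j (Ad i f).
Proof.
rewrite !AE !(DkB, DkZ, DkX) (D_comm _ i j) (cc_sym i j).
set Di := D i f; set Dj := D j f; set DD := D j (D i f); set c := cc j i f.
rewrite -!mul_mpolyC; ring.
Qed.

Lemma A_sw a b i f : sw a b (Ad i (sw a b f)) = Ad (tperm a b i) f.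
Proof.
rewrite !AE SwB !SwZ SwM SwX SwK D_equiv; reflexivity.
Qed.

Lemma DA j l g : D j (Ad l g) = Ad l (D j g) + s *: cc j l g.
Proof.
rewrite !AE DkB !DkZ DkX (D_comm _ j l).
set Dl := D l (D j g); set c := cc j l g.
rewrite -!mul_mpolyC; ring.
Qed.

End Adag.


Fact Sig_key : unit. Proof. by []. Qed.

Section Sig.
Variables (C : numClosedFieldType) (N : nat) (beta : nat).
Notation P := {mpoly C[N]}.
Implicit Types (f g : P) (a b i j k l : 'I_N).
Local Notation A := (@Ad C N beta).

Definition Fm (q : seq 'I_N) (m : 'X_{1..N}) (g : P) : P :=
  foldr (fun i h => iter (m i) (A i) \o h) id q g.

Lemma adag_monoE m g : adag_mono beta m g = Fm (enum 'I_N) m g.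
Proof. by rewrite /adag_mono /Fm -AdE. Qed.

Lemma iterA_comm i k n g : A i (iter n (A k) g) = iter n (A k) (A i g).
Proof. by elim: n => [|n IH] //=; rewrite A_comm IH. Qed.

Lemma iter_iter i k (n1 n2 : nat) g :
  iter n1 (A i) (iter n2 (A k) g) = iter n2 (A k) (iter n1 (A i) g).
Proof. by elim: n1 => [|n1 IH] //=; rewrite IH iterA_comm. Qed.

Lemma Fm_comm i q m g : A i (Fm q m g) = Fm q m (A i g).
Proof.
elim: q => [|x q IH] //=; rewrite /Fm /= iterA_comm; congr iter; exact: IH.
Qed.

Lemma Fm_U q m l g :
  Fm q (m + U_(l))%MM g = iter (count_mem l q) (A l) (Fm q m g).
Proof.
elim: q => [|x q IH] //=.
rewrite /Fm /= -/(Fm q (m + U_(l))%MM g) -/(Fm q m g) IH mnmDE mnm1E.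
have [->|nxl] := eqVneq x l.
  rewrite -!iterD; apply: (congr1 (fun n => iter n (A l) (Fm q m g))); simpl; lia.
rewrite /= addn0 iter_iter; reflexivity.
Qed.

Lemma Fm0 q g : Fm q 0%MM g = g.
Proof. by elim: q => [|x q IH] //=; rewrite /Fm /= mnm0E /= -/(Fm q _ g) IH. Qed.

Lemma count_enum l : count_mem l (enum 'I_N) = 1%N.
Proof. by rewrite count_uniq_mem ?enum_uniq // mem_enum. Qed.

Lemma sigE f kk : (msize f <= kk)%N ->
  sigmaA beta f = \sum_(m : 'X_{1..N < kk}) f@_m *: adag_mono beta m 1.
Proof.
move=> le_pi; set I : subFinType _ := 'X_{1..N < kk}.
rewrite /sigmaA (big_mksub I) ?msupp_uniq //=; first last.
  by move=> x /msize_mdeg_lt /leq_trans; apply.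
rewrite big_rmcond //= => j /memN_msupp_eq0 ->.
by rewrite scale0r.
Qed.

Lemma sigD f g : sigmaA beta (f + g) = sigmaA beta f + sigmaA beta g.
Proof.
set kk := maxn (msize f) (msize g).
rewrite !(sigE (kk := kk)) ?leq_maxl ?leq_maxr ?(leq_trans (msizeD_le _ _)) //.
rewrite -big_split /=; apply: eq_bigr => m _; rewrite mcoeffD scalerDl //.
Qed.

Lemma sigZ c f : sigmaA beta (c *: f) = c *: sigmaA beta f.
Proof.
rewrite !(sigE (kk := msize f)) ?msizeZ_le // scaler_sumr.
by apply: eq_bigr => m _; rewrite mcoeffZ scalerA.
Qed.

Lemma sigXm m : sigmaA beta 'X_[m] = Fm (enum 'I_N) m 1.
Proof.
by rewrite /sigmaA msuppX big_seq1 mcoeffX eqxx scale1r adag_monoE.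
Qed.

Definition Sig := locked_with Sig_key (sigmaA (C:=C) (N:=N) beta).
Lemma SigE : Sig = sigmaA beta. Proof. by rewrite /Sig unlock. Qed.

Lemma SigD f g : Sig (f + g) = Sig f + Sig g.
Proof. by rewrite SigE sigD. Qed.
Lemma SigZ c f : Sig (c *: f) = c *: Sig f.
Proof. by rewrite SigE sigZ. Qed.
Lemma Sig0 : Sig 0 = 0.
Proof. by have := SigZ 0 0; rewrite !scale0r. Qed.
Lemma SigN f : Sig (- f) = - Sig f.
Proof. by rewrite -scaleN1r SigZ scaleN1r. Qed.
Lemma Sig_sum (I : Type) (rr : seq I) (Pp : pred I) (F : I -> P) :
  Sig (\sum_(k <- rr | Pp k) F k) = \sum_(k <- rr | Pp k) Sig (F k).
Proof. exact: (big_morph _ SigD Sig0). Qed.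
Lemma Sig1 : Sig 1 = 1.
Proof. rewrite SigE; have := sigXm 0%MM; rewrite mpolyX0 Fm0; exact. Qed.

Lemma SigX l f : Sig ('X_l * f) = A l (Sig f).
Proof.
have -> : 'X_l * f = \sum_(m <- msupp f) f@_m *: 'X_[m + U_(l)].
  rewrite {1}(mpolyE f) mulr_sumr; apply: eq_bigr => m _.
  by rewrite -scalerAr mpolyXD mulrC.
rewrite Sig_sum [in RHS](mpolyE f) Sig_sum A_sum.
apply: eq_bigr => m _; rewrite !SigZ AZ; congr (_ *: _).
by rewrite SigE !sigXm Fm_U count_enum /= Fm_comm.
Qed.

End Sig.


Section Main.
Variables (C : numClosedFieldType) (N : nat) (beta : nat).
Notation P := {mpoly C[N]}.
Implicit Types (f g : P) (a b i j k l : 'I_N).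
Local Notation sw := (@Sw C N).
Local Notation D := (@Dk C N beta).
Local Notation cc := (@ccS C N beta).
Local Notation A := (@Ad C N beta).
Local Notation S := (@Sig C N beta).
Local Notation s := (sqrtC (2%:R : C)).
Local Notation r := ((sqrtC (2%:R : C))^-1).

Lemma Sig_sw a b f : sw a b (S f) = S (sw a b f).
Proof.
elim/mp_ind: f.
- by rewrite Sw1 Sig1 Sw1.
- move=> f g Hf Hg; rewrite SigD SwD SwD SigD; congr (_ + _); [exact Hf|exact Hg].
- move=> c f Hf; rewrite SigZ SwZ SwZ SigZ; congr (_ *: _); exact Hf.
- move=> l f Hf; rewrite SigX SwM SwX SigX.
  have := A_sw beta a b l (sw a b (S f)); rewrite SwK => ->.
  congr (A _ _); exact Hf.
Qed.

Lemma Sig_ssum i f : S (ssum i f) = ssum i (S f).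
Proof.
rewrite !ssumE Sig_sum; apply: eq_bigr => k _; symmetry; exact: Sig_sw.
Qed.

Lemma Sig_cc j l f : S (cc j l f) = cc j l (S f).
Proof.
have [->|nlj] := eqVneq l j.
  rewrite !cc_ii SigD SigZ Sig_ssum; reflexivity.
rewrite !(cc_ne _ _ nlj) SigN SigZ Sig_sw; reflexivity.
Qed.

Lemma Sig_D j f : D j (S f) = s *: S (D j f).
Proof.
elim/mp_ind: f.
- by rewrite Sig1 Dk1 Sig0 scaler0.
- move=> f g Hf Hg; rewrite SigD DkD DkD SigD scalerDr; congr (_ + _); [exact Hf|exact Hg].
- move=> c f Hf; rewrite SigZ DkZ DkZ SigZ scalerA mulrC -scalerA; congr (_ *: _); exact Hf.
- move=> l f Hf; rewrite SigX DA DkX SigD SigX Sig_cc scalerDr -AZ; congr (A _ _ + _).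
  exact Hf.
Qed.

Lemma rs : r * s = 1.
Proof. by rewrite mulVf //; exact: s_neq0. Qed.

Lemma sig_swap_c i j f : sigmaA beta (swap i j f) = swap i j (sigmaA beta f).
Proof. rewrite -SigE -SwE; symmetry; exact: Sig_sw. Qed.

Lemma sig_cher_c j f :
  sigmaA beta (cherednik beta j f) = rho_cherednik beta j (sigmaA beta f).
Proof.
rewrite /cherednik /rho_cherednik /aop -SigE -SwE -DkE -AdE.
rewrite SigD SigX SigZ Sig_sum Sig_D scalerA rs scale1r.
congr (_ + _ *: _); apply: eq_bigr => k _; symmetry; exact: Sig_sw.
Qed.

End Main.

Unset Implicit Arguments.

Theorem theorem2p4 (C : numClosedFieldType) (N : nat) (hN : (0 < N)%N)
  (beta : nat) (Q : H0expr C N) (f : {mpoly C[N]}) :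
  sigmaA beta (evalH (cherednik beta) Q f)
  = evalH (rho_cherednik beta) Q (sigmaA beta f).
Proof.
elim: Q f => [j|i j||c Q1 IH1|Q1 IH1 Q2 IH2|Q1 IH1 Q2 IH2] f /=.
- exact: sig_cher_c.
- exact: sig_swap_c.
- reflexivity.
- rewrite sigZ; congr (_ *: _); exact: IH1.
- rewrite sigD; congr (_ + _); [exact: IH1|exact: IH2].
- rewrite IH1; congr (evalH _ Q1 _); exact: IH2.
Qed.
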